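(* Let $\mu$ be a monotone system over $\{0,1\}^V$ and $\theta\in(0,1)$. Then the lifted distribution $\pi$ is a monotone system over $\{0,1,\star\}^V$, and consequently the Glauber dynamics $P_{\pi\text{-GD}}$ on $\pi$ is stochastically monotone.
   Context: Monotone system (over $\{0,1\}^V$): for every $v$ and all feasible (positive probability) $\sigma\preceq\tau$ in $\{0,1\}^{V\setminus\{v\}}$ (coordinatewise), $\mu^\sigma_v(1)\le\mu^\tau_v(1)$, $\mu^\sigma_v$ being the conditional marginal. $\mathsf{lift}:\{0,1\}^V\to\{0,1,\star\}^V$ is random: independently per coordinate, $0\mapsto0$, $1\mapsto\star$ w.p. $1-\theta$, $1\mapsto1$ w.p. $\theta$; $\pi$ is the law of $\mathsf{lift}(X)$ for $X\sim\mu$, support $\Omega(\pi)$. Order $0<1<\star$ and coordinatewise partial order on $\{0,1,\star\}^V$. A distribution $\pi$ over $\{0,1,\star\}^V$ is a monotone system if for every $i\in V$ and all feasible comparable $\sigma\preceq\tau$ in $\{0,1,\star\}^{V\setminus\{i\}}$, there is a coupling $(x,y)$ of the conditional marginals $\pi^\sigma_i,\pi^\tau_i$ with $x\le y$ a.s. $P_{\pi\text{-GD}}$: pick $v$ uniformly, resample $X_v$ from $\pi$ given $X_{V\setminus\{v\}}$. A chain $P$ on $\Omega(\pi)$ is stochastically monotone if $Pf$ is increasing for every increasing $f:\Omega(\pi)\to\mathbb R_{\ge0}$ (increasing: $X\preceq Y\Rightarrow f(X)\le f(Y)$). *)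

(* Defs.v *)
From HB Require Import structures.
From mathcomp Require Import all_boot all_order all_algebra.
Set Implicit Arguments. Unset Strict Implicit. Unset Printing Implicit Defensive.
Import Order.TTheory GRing.Theory Num.Theory.
Local Open Scope ring_scope.

Inductive spin3 := S0 | S1 | Sstar.

Definition spin3_code (s : spin3) : 'I_3 :=
  match s with S0 => inord 0 | S1 => inord 1 | Sstar => inord 2 end.
Definition spin3_decode (i : 'I_3) : spin3 :=
  match val i with 0%N => S0 | 1%N => S1 | _ => Sstar end.
Lemma spin3_codeK : cancel spin3_code spin3_decode.
Proof. by case; rewrite /spin3_decode /= inordK. Qed.
HB.instance Definition _ := Finite.copy spin3 (can_type spin3_codeK).

Definition rank3 (s : spin3) : nat :=
  match s with S0 => 0 | S1 => 1 | Sstar => 2 end.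
Definition le3 (a b : spin3) : bool := (rank3 a <= rank3 b)%N.

Section Spin.
Variables (R : realFieldType) (V A : finType).

Definition is_distr (p : {ffun V -> A} -> R) : Prop :=
  (forall x, 0 <= p x) /\ \sum_x p x = 1.

(* x and s agree on V \ {v}: a configuration s on V\{v} is represented by any
   full configuration, its value at v being irrelevant *)
Definition agree_off (v : V) (x s : {ffun V -> A}) : bool :=
  [forall u, (u != v) ==> (x u == s u)].

Definition pin_mass (p : {ffun V -> A} -> R) (v : V) (s : {ffun V -> A}) : R :=
  \sum_(x | agree_off v x s) p x.

Definition feasible (p : {ffun V -> A} -> R) v s : Prop := 0 < pin_mass p v s.

Definition cond_marg (p : {ffun V -> A} -> R) (v : V) (s : {ffun V -> A}) (a : A) : R :=
  (\sum_(x | agree_off v x s && (x v == a)) p x) / pin_mass p v s.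

Definition le_off (le : rel A) (v : V) (s t : {ffun V -> A}) : Prop :=
  forall u, u != v -> le (s u) (t u).

Definition le_conf (le : rel A) (x y : {ffun V -> A}) : Prop :=
  forall u, le (x u) (y u).

Definition monotone_coupling (le : rel A) (m1 m2 : A -> R) (c : A -> A -> R) : Prop :=
  [/\ forall a b, 0 <= c a b,
      forall a, \sum_b c a b = m1 a,
      forall b, \sum_a c a b = m2 b &
      forall a b, 0 < c a b -> le a b].

Definition monotone_system (le : rel A) (p : {ffun V -> A} -> R) : Prop :=
  forall (i : V) (s t : {ffun V -> A}),
    feasible p i s -> feasible p i t -> le_off le i s t ->
    exists c : A -> A -> R,
      monotone_coupling le (cond_marg p i s) (cond_marg p i t) c.

Definition in_supp (p : {ffun V -> A} -> R) (x : {ffun V -> A}) : bool := 0 < p x.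

Definition glauber (p : {ffun V -> A} -> R) (X Y : {ffun V -> A}) : R :=
  (#|V|%:R)^-1 * \sum_v (if agree_off v Y X then cond_marg p v X (Y v) else 0).

Definition stoch_monotone (le : rel A) (p : {ffun V -> A} -> R)
    (P : {ffun V -> A} -> {ffun V -> A} -> R) : Prop :=
  forall f : {ffun V -> A} -> R,
    (forall X, in_supp p X -> 0 <= f X) ->
    (forall X Y, in_supp p X -> in_supp p Y -> le_conf le X Y -> f X <= f Y) ->
    forall X Y, in_supp p X -> in_supp p Y -> le_conf le X Y ->
      \sum_(Z | in_supp p Z) P X Z * f Z <= \sum_(Z | in_supp p Z) P Y Z * f Z.

End Spin.

Definition monotone_system01 (R : realFieldType) (V : finType)
    (mu : {ffun V -> bool} -> R) : Prop :=
  forall (v : V) (s t : {ffun V -> bool}),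
    feasible mu v s -> feasible mu v t -> le_off implb v s t ->
    cond_marg mu v s true <= cond_marg mu v t true.

(* probability that a single coordinate b is lifted to a *)
Definition lift_kernel (R : realFieldType) (theta : R) (b : bool) (a : spin3) : R :=
  match b, a with
  | false, S0 => 1
  | true, S1 => theta
  | true, Sstar => 1 - theta
  | _, _ => 0
  end.

(* law of lift(X), X ~ mu, coordinates lifted independently *)
Definition lift_distr (R : realFieldType) (V : finType) (theta : R)
    (mu : {ffun V -> bool} -> R) (y : {ffun V -> spin3}) : R :=
  \sum_x mu x * \prod_v lift_kernel theta (x v) (y v).

(* Main.v *)
Require Import Defs.
From mathcomp Require Import all_boot all_order all_algebra.
Import Order.TTheory GRing.Theory Num.Theory.
Local Open Scope ring_scope.
From mathcomp Require Import ring lra.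
Set Implicit Arguments. Unset Strict Implicit.

Section Gen.
Variables (R : realFieldType) (V A : finType).

Definition upd (X : {ffun V -> A}) (v : V) (a : A) : {ffun V -> A} :=
  [ffun u => if u == v then a else X u].

Lemma upd_v X v a : upd X v a v = a.
Proof. by rewrite ffunE eqxx. Qed.

Lemma agree_upd v (X Z : {ffun V -> A}) a :
  (agree_off v Z X && (Z v == a)) = (Z == upd X v a).
Proof.
apply/andP/eqP => [[/forallP H /eqP Ha]|->].
- apply/ffunP => u; rewrite ffunE; case: eqP => [->//|/eqP nu].
  exact/eqP/(implyP (H u)).
- split; last by rewrite upd_v.
  by apply/forallP => u; apply/implyP => nu; rewrite ffunE (negbTE nu).
Qed.

Lemma sum_agree v (X : {ffun V -> A}) (g : {ffun V -> A} -> R) :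
  \sum_(Z | agree_off v Z X) g Z = \sum_a g (upd X v a).
Proof.
rewrite (partition_big (fun Z : {ffun V -> A} => Z v) predT) //=.
apply: eq_bigr => a _; rewrite (big_pred1 (upd X v a)) // => Z.
exact: agree_upd.
Qed.

Lemma cm_num (p : {ffun V -> A} -> R) v s a :
  \sum_(x | agree_off v x s && (x v == a)) p x = p (upd s v a).
Proof. by rewrite (big_pred1 (upd s v a)) // => Z; exact: agree_upd. Qed.

Lemma cm_eq (p : {ffun V -> A} -> R) v s a :
  cond_marg p v s a = p (upd s v a) / pin_mass p v s.
Proof. by rewrite /cond_marg cm_num. Qed.

Lemma glauber_sum (p : {ffun V -> A} -> R) (f : {ffun V -> A} -> R) X :
  \sum_(Z | in_supp p Z) glauber p X Z * f Z =
  (#|V|%:R)^-1 * \sum_v \sum_a cond_marg p v X a *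
      (if in_supp p (upd X v a) then f (upd X v a) else 0).
Proof.
rewrite /glauber; under eq_bigr do rewrite -mulrA.
rewrite -mulr_sumr; congr (_ * _).
under eq_bigr do rewrite mulr_suml.
rewrite exchange_big /=; apply: eq_bigr => v _.
transitivity (\sum_(Z | agree_off v Z X) cond_marg p v X (Z v) *
   (if in_supp p Z then f Z else 0)).
  rewrite big_mkcond [RHS]big_mkcond /=; apply: eq_bigr => Z _.
  by case: (in_supp p Z); case: (agree_off v Z X); rewrite ?mul0r ?mulr0.
by rewrite sum_agree; apply: eq_bigr => a _; rewrite upd_v.
Qed.

Lemma feas_supp (p : {ffun V -> A} -> R) v X :
  (forall x, 0 <= p x) -> in_supp p X -> feasible p v X.
Proof.
move=> p0 sX; rewrite /feasible /pin_mass (bigD1 X) /=.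
  by apply: (lt_le_trans sX); rewrite lerDl sumr_ge0.
by apply/forallP => u; apply/implyP.
Qed.

Lemma ms_sm (le : rel A) (p : {ffun V -> A} -> R) :
  (forall x, 0 <= p x) -> monotone_system le p -> stoch_monotone le p (glauber p).
Proof.
move=> p0 Hms f _ fmon X Y sX sY XY.
rewrite !glauber_sum; apply: ler_wpM2l; first by rewrite invr_ge0 ler0n.
apply: ler_sum => v _.
have fs Z : in_supp p Z -> feasible p v Z by move=> sZ; apply: feas_supp.
have [c [c0 c1 c2 cle]] := Hms v X Y (fs X sX) (fs Y sY)
   (fun u _ => XY u).
have supp_of (W : {ffun V -> A}) a : feasible p v W ->
    0 < cond_marg p v W a -> in_supp p (upd W v a).
  move=> fW; rewrite cm_eq pmulr_lgt0 //; by rewrite invr_gt0.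
rewrite (eq_bigr (fun a => \sum_b c a b * (if in_supp p (upd X v a)
     then f (upd X v a) else 0))); last by move=> a _; rewrite -c1 mulr_suml.
rewrite [X in _ <= X](eq_bigr (fun b => \sum_a c a b * (if in_supp p (upd Y v b)
     then f (upd Y v b) else 0))); last by move=> b _; rewrite -c2 mulr_suml.
rewrite [X in _ <= X]exchange_big /=.
apply: ler_sum => a _; apply: ler_sum => b _.
have := c0 a b; rewrite le0r => /orP[/eqP->|cpos]; first by rewrite !mul0r.
apply: ler_wpM2l; first exact: c0.
have pa : in_supp p (upd X v a).
  apply: (supp_of X a (fs X sX)); rewrite -c1.
  apply: (lt_le_trans cpos); rewrite (bigD1 b) //= lerDl sumr_ge0 // => *; exact: c0.
have pb : in_supp p (upd Y v b).
  apply: (supp_of Y b (fs Y sY)); rewrite -c2.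
  apply: (lt_le_trans cpos); rewrite (bigD1 a) //= lerDl sumr_ge0 // => *; exact: c0.
rewrite pa pb; apply: fmon => // u; rewrite !ffunE; case: eqP => _.
  exact: cle.
exact: XY.
Qed.
End Gen.
Lemma eq3 (a b : spin3) : (a == b) = (rank3 a == rank3 b)%N.
Proof. by apply/eqP/eqP; case: a; case: b. Qed.
Lemma sum3 (R : realFieldType) (F : spin3 -> R) : \sum_a F a = F S0 + F S1 + F Sstar.
Proof.
have P : perm_eq (index_enum spin3) [:: S0; S1; Sstar].
  apply: uniq_perm; first exact: index_enum_uniq.
    by rewrite /= !inE !eq3.
  by move=> a; rewrite mem_index_enum !inE !eq3; case: a.
by rewrite (perm_big _ P) !big_cons big_nil /= addr0 addrA.
Qed.

Section Lift.
Variables (R : realFieldType) (V : finType) (mu : {ffun V -> bool} -> R) (theta : R).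
Hypothesis mu0 : forall x, 0 <= mu x.
Hypothesis th0 : 0 < theta.
Hypothesis th1 : theta < 1.
Hypothesis Hmon : monotone_system01 mu.

Local Notation k := (lift_kernel theta).
Local Notation pi := (lift_distr theta mu).

Definition sig (s : {ffun V -> spin3}) : {ffun V -> bool} := [ffun u => s u != S0].
Definition cst (i : V) (s : {ffun V -> spin3}) := \prod_(v | v != i) k (sig s v) (s v).
Definition M0 (i : V) (s : {ffun V -> spin3}) := \sum_(x | agree_off i x (sig s) && ~~ x i) mu x.
Definition M1 (i : V) (s : {ffun V -> spin3}) := \sum_(x | agree_off i x (sig s) && x i) mu x.

Lemma kern_zero b a : b != (a != S0) -> k b a = 0.
Proof. by case: b; case: a; rewrite ?eq3. Qed.

Lemma kern_ge0 b a : 0 <= k b a.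
Proof. case: b; case: a => //=; rewrite ?subr_ge0 ?ltW //. Qed.

Lemma cst_gt0 i s : 0 < cst i s.
Proof.
apply: prodr_gt0 => v _; rewrite ffunE; case: (s v); rewrite ?eq3 /= ?subr_gt0 //.
Qed.

Lemma prod_off (x : {ffun V -> bool}) (i : V) (s : {ffun V -> spin3}) : \prod_(v | v != i) k (x v) (s v) =
  (if agree_off i x (sig s) then cst i s else 0).
Proof.
case: ifP => H.
  apply: eq_bigr => v nv; congr (k _ _).
  by have /eqP := implyP (forallP H v) nv.
move/negbT: H => /forallPn [u]; rewrite negb_imply => /andP[nu xu].
rewrite (bigD1 u) //= kern_zero ?mul0r //; by rewrite ffunE in xu.
Qed.

Lemma prod_upd (x : {ffun V -> bool}) (i : V) (s : {ffun V -> spin3}) a : \prod_v k (x v) (upd s i a v) =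
  k (x i) a * (if agree_off i x (sig s) then cst i s else 0).
Proof.
rewrite (bigD1 i) //= upd_v -prod_off; congr (_ * _).
by apply: eq_bigr => v nv; rewrite ffunE (negbTE nv).
Qed.

Lemma N_formula (i : V) (s : {ffun V -> spin3}) a : pi (upd s i a) = cst i s * (k false a * M0 i s + k true a * M1 i s).
Proof.
rewrite /lift_distr.
under eq_bigr do rewrite prod_upd.
transitivity (\sum_(x | agree_off i x (sig s)) mu x * k (x i) a * cst i s).
  rewrite [RHS]big_mkcond /=; apply: eq_bigr => x _.
  by case: (agree_off i x (sig s)); rewrite ?mulr0 ?mulrA.
rewrite -mulr_suml mulrC; congr (_ * _).
rewrite (bigID (fun x : {ffun V -> bool} => x i)) /= addrC /M0 /M1 !mulr_sumr; congr (_ + _).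
  by apply: eq_bigr => x /andP[_ /negbTE ->]; rewrite mulrC.
by apply: eq_bigr => x /andP[_ ->]; rewrite mulrC.
Qed.

Lemma pm_formula (i : V) (s : {ffun V -> spin3}) : pin_mass pi i s = cst i s * (M0 i s + M1 i s).
Proof.
rewrite /pin_mass sum_agree sum3 !N_formula /=; ring.
Qed.

Lemma pmu_formula (i : V) (s : {ffun V -> spin3}) : pin_mass mu i (sig s) = M0 i s + M1 i s.
Proof. by rewrite /pin_mass (bigID (fun x : {ffun V -> bool} => x i)) /= addrC. Qed.

Lemma cmu_formula (i : V) (s : {ffun V -> spin3}) : cond_marg mu i (sig s) true = M1 i s / (M0 i s + M1 i s).
Proof.
rewrite /cond_marg pmu_formula; congr (_ / _).
by apply: eq_bigl => x; rewrite eqb_id.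
Qed.

Lemma M0_ge0 i s : 0 <= M0 i s. Proof. exact: sumr_ge0. Qed.
Lemma M1_ge0 i s : 0 <= M1 i s. Proof. exact: sumr_ge0. Qed.

Lemma cm_formula (i : V) (s : {ffun V -> spin3}) a : 0 < M0 i s + M1 i s ->
  cond_marg pi i s a = k false a * (1 - cond_marg mu i (sig s) true)
                     + k true a * cond_marg mu i (sig s) true.
Proof.
move=> Mpos; rewrite cm_eq N_formula pm_formula cmu_formula.
rewrite -mulf_div divff ?mul1r; last by rewrite gt_eqF ?cst_gt0.
have Mne : M0 i s + M1 i s != 0 by rewrite gt_eqF.
by field.
Qed.

Lemma pi_ge0 y : 0 <= pi y.
Proof.
apply: sumr_ge0 => x _; apply: mulr_ge0 => //; apply: prodr_ge0 => v _.
exact: kern_ge0.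
Qed.

Definition coup (p q : R) (a b : spin3) : R :=
  match a, b with
  | S0, S0 => 1 - q
  | S0, S1 => theta * (q - p)
  | S0, Sstar => (1 - theta) * (q - p)
  | S1, S1 => theta * p
  | Sstar, Sstar => (1 - theta) * p
  | _, _ => 0
  end.

Lemma lift_ms : monotone_system le3 pi.
Proof.
move=> i s t fs ft st.
have Ms : 0 < M0 i s + M1 i s.
  by move: fs; rewrite /feasible pm_formula pmulr_rgt0 // cst_gt0.
have Mt : 0 < M0 i t + M1 i t.
  by move: ft; rewrite /feasible pm_formula pmulr_rgt0 // cst_gt0.
have sst : le_off implb i (sig s) (sig t).
  move=> u nu; rewrite !ffunE; have := st u nu; rewrite /le3.
  by case: (s u); case: (t u); rewrite ?eq3.
have fms : feasible mu i (sig s) by rewrite /feasible pmu_formula.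
have fmt : feasible mu i (sig t) by rewrite /feasible pmu_formula.
have := Hmon fms fmt sst.
have p0 : 0 <= cond_marg mu i (sig s) true.
  by rewrite cmu_formula; apply: divr_ge0; [exact: M1_ge0 | exact: ltW].
have q1 : cond_marg mu i (sig t) true <= 1.
  by rewrite cmu_formula ler_pdivrMr // mul1r lerDr; exact: M0_ge0.
have ems := fun a => cm_formula a Ms.
have emt := fun a => cm_formula a Mt.
move: p0 q1 ems emt.
move: (cond_marg mu i (sig s) true) (cond_marg mu i (sig t) true) => p q.
move=> p0 q1 ems emt pq.
exists (coup p q); split.
- by move=> a b; case: a; case: b => /=; rewrite ?subr_ge0 //; apply: mulr_ge0; rewrite ?subr_ge0 //; apply: ltW.
- by move=> a; rewrite sum3 ems; case: a => /=; ring.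
- by move=> b; rewrite sum3 emt; case: b => /=; ring.
- by move=> a b; case: a; case: b => //=; rewrite ltxx.
Qed.
End Lift.

Theorem lemma5p1 (R : realFieldType) (V : finType)
    (mu : {ffun V -> bool} -> R) (theta : R) :
  is_distr mu -> monotone_system01 mu -> 0 < theta < 1 ->
  monotone_system le3 (lift_distr theta mu) /\
  stoch_monotone le3 (lift_distr theta mu) (glauber (lift_distr theta mu)).
Proof.
move=> [mu0 _] Hmon /andP[th0 th1].
have ms := lift_ms mu0 th0 th1 Hmon.
split => //; apply: ms_sm => // y; exact: pi_ge0.
Qed.
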